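(* Let $d \ge 1$, let $\mathcal{X}$ be a normed space (e.g. $\mathbb{R}^{w\times h\times c}$), and let $G:\mathbb{R}^d\to\mathcal{X}$ be a fixed (pre-trained generator) function. Fix constants $L \ge 0$, $\epsilon>0$ and $\epsilon'>\epsilon$. For each $n\ge 1$, let $\mathbf{z}^{(1)},\dots,\mathbf{z}^{(n)}$ be i.i.d. samples from the standard Gaussian $\mathcal{N}(0, I_d)$, and let $\mathbf{z}\sim\mathcal{N}(0,I_d)$ be independent of them. Let $I_n:\mathcal{X}\to\mathbb{R}^d$ be an inverter function (which may depend on $\mathbf{z}^{(1)},\dots,\mathbf{z}^{(n)}$ but not on $\mathbf{z}$) such that the composite $I_n\circ G:\mathbb{R}^d\to\mathbb{R}^d$ is $L$-Lipschitz and $$\|I_n(G(\mathbf{z}^{(i)}))-\mathbf{z}^{(i)}\|<\epsilon \quad \text{for all } i\in\{1,\dots,n\}.$$ Then $$\Pr\big(\|I_n(G(\mathbf{z}))-\mathbf{z}\|<\epsilon'\big)=1-o(1)\quad\text{as } n\to\infty,$$ where the probability is over $(\mathbf{z}^{(1)},\dots,\mathbf{z}^{(n)},\mathbf{z})$. That is, with high probability $I_n$ approximately inverts $G$ on a fresh latent sample.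
   Context: Norms on $\mathbb{R}^d$ are Euclidean. The Lipschitz constant $L$ is a fixed constant not depending on $n$. $\mathcal{N}(0,I_d)$ denotes the standard $d$-dimensional Gaussian distribution. *)

(* Defs.v *)
From HB Require Import structures.
From mathcomp Require Import all_boot all_order all_algebra.
From mathcomp Require Import all_classical all_reals all_analysis.
Set Implicit Arguments. Unset Strict Implicit. Unset Printing Implicit Defensive.
Import Order.TTheory GRing.Theory Num.Theory.
Import numFieldNormedType.Exports.
Local Open Scope classical_set_scope.
Local Open Scope ring_scope.

(* Euclidean norm on R^d, vectors represented as row vectors 'rV[R]_d.
   (The library's canonical norm on matrices is the max norm, so we
   define the Euclidean one explicitly.) *)
Definition enorm {R : realType} {d : nat} (v : 'rV[R]_d) : R :=
  Num.sqrt (\sum_(k < d) v ord0 k ^+ 2).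

(* Mutual independence of a finite family of real random variables:
   each is measurable and the product rule holds for every choice of
   Borel sets (this implies the product rule for every subfamily, by
   choosing the whole space for the other indices). *)
Definition mutually_independent {dT : measure_display} {T : measurableType dT}
  {R : realType} (P : probability T R) {I : finType} (X : I -> T -> R) : Prop :=
  (forall i, measurable_fun [set: T] (X i)) /\
  forall B : I -> set R, (forall i, measurable (B i)) ->
    P (\bigcap_(i in [set: I]) (X i @^-1` B i)) =
    (\prod_(i : I) P (X i @^-1` B i))%E.

Definition std_normal_rv {dT : measure_display} {T : measurableType dT}
  {R : realType} (P : probability T R) (X : T -> R) : Prop :=
  forall B : set R, measurable B -> P (X @^-1` B) = normal_prob 0 1 B.

(* The family of random vectors W j : T -> R^d (j : J) is i.i.d. with law
   N(0, I_d): by definition of N(0, I_d), all coordinates of all the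
   vectors form a single family of mutually independent N(0,1) variables. *)
Definition iid_std_gaussian_vectors {dT : measure_display} {T : measurableType dT}
  {R : realType} (P : probability T R) {J : finType} {d : nat}
  (W : J -> T -> 'rV[R]_d) : Prop :=
  mutually_independent P (fun jk : J * 'I_d => fun w => W jk.1 w ord0 jk.2) /\
  forall (j : J) (k : 'I_d), std_normal_rv P (fun w => W j w ord0 k).

(* The training samples z^(1..n) (index Some i) together with the fresh
   sample z (index None). *)
Definition all_samples {T : Type} {V : Type} (n : nat)
  (Zs : 'I_n -> T -> V) (Z : T -> V) : option 'I_n -> T -> V :=
  fun j => match j with Some i => Zs i | None => Z end.

(* Main.v *)
Require Import Defs.
From HB Require Import structures.
From mathcomp Require Import all_boot all_order all_algebra.
From mathcomp Require Import all_classical all_reals all_analysis.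
From mathcomp Require Import ring lra.
Import Order.TTheory GRing.Theory Num.Theory.
Import numFieldNormedType.Exports.
Local Open Scope classical_set_scope.
Local Open Scope ring_scope.


Section Enorm.
Variables (R : realType) (d : nat).
Implicit Types u v : 'rV[R]_d.

Lemma enorm_ge0 u : 0 <= enorm u.
Proof. exact: sqrtr_ge0. Qed.

Lemma enormN u : enorm (- u) = enorm u.
Proof. by rewrite /enorm; apply: congr1; apply: eq_bigr => k _; rewrite mxE sqrrN. Qed.

Lemma enorm_sym u v : enorm (u - v) = enorm (v - u).
Proof. by rewrite -enormN opprB. Qed.

Lemma cauchy_schwarz (a b : 'I_d -> R) :
  (\sum_k a k * b k) ^+ 2 <= (\sum_k a k ^+ 2) * (\sum_k b k ^+ 2).
Proof.
have h1 : \sum_i \sum_j a i ^+ 2 * b j ^+ 2 = (\sum_k a k ^+ 2) * (\sum_k b k ^+ 2).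
  by rewrite big_distrl; apply: eq_bigr => i _; rewrite big_distrr.
have h2 : \sum_i \sum_j a j ^+ 2 * b i ^+ 2 = (\sum_k a k ^+ 2) * (\sum_k b k ^+ 2).
  rewrite mulrC big_distrl; apply: eq_bigr => i _; rewrite big_distrr.
  by apply: eq_bigr => j _; rewrite mulrC.
have h3 : \sum_i \sum_j (a i * b i) * (a j * b j) = (\sum_k a k * b k) ^+ 2.
  by rewrite expr2 big_distrl; apply: eq_bigr => i _; rewrite big_distrr.
have E : \sum_i \sum_j (a i * b j - a j * b i) ^+ 2 =
   ((\sum_k a k ^+ 2) * (\sum_k b k ^+ 2) - (\sum_k a k * b k) ^+ 2) *+ 2.
  transitivity (\sum_i (\sum_j a i ^+ 2 * b j ^+ 2 + \sum_j a j ^+ 2 * b i ^+ 2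
      - (\sum_j (a i * b i) * (a j * b j)) *+ 2)).
    apply: eq_bigr => i _; rewrite -sumrMnl -big_split -sumrB.
    by apply: eq_bigr => j _ /=; ring.
  by rewrite sumrB big_split /= sumrMnl h1 h2 h3 mulr2n; ring.
have : 0 <= \sum_i \sum_j (a i * b j - a j * b i) ^+ 2.
  by apply: sumr_ge0 => i _; apply: sumr_ge0 => j _; exact: sqr_ge0.
rewrite E => H.
have : 0 <= (\sum_k a k ^+ 2) * (\sum_k b k ^+ 2) - (\sum_k a k * b k) ^+ 2.
  by move: H; rewrite -mulr_natr pmulr_lge0.
by rewrite subr_ge0.
Qed.

Lemma enorm_triangle u v : enorm (u + v) <= enorm u + enorm v.
Proof.
rewrite /enorm.
set A := \sum_k u ord0 k ^+ 2.
set B := \sum_k v ord0 k ^+ 2.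
have A0 : 0 <= A by apply: sumr_ge0 => k _; exact: sqr_ge0.
have B0 : 0 <= B by apply: sumr_ge0 => k _; exact: sqr_ge0.
set C := \sum_k u ord0 k * v ord0 k.
have cs : C <= Num.sqrt A * Num.sqrt B.
  rewrite -sqrtrM //.
  apply: le_trans (ler_norm C) _.
  rewrite -sqrtr_sqr ler_sqrt ?mulr_ge0 //.
  exact: (cauchy_schwarz (fun k => u ord0 k) (fun k => v ord0 k)).
rewrite -[X in _ <= X]ger0_norm ?addr_ge0 ?sqrtr_ge0 //.
rewrite -sqrtr_sqr ler_sqrt ?sqr_ge0 //.
have -> : \sum_k (u + v) ord0 k ^+ 2 = A + B + C *+ 2.
  rewrite /A /B /C -sumrMnl -!big_split; apply: eq_bigr => k _ /=.
  rewrite mxE; ring.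
have sA := sqr_sqrtr A0; have sB := sqr_sqrtr B0.
set a := Num.sqrt A in cs sA *; set b := Num.sqrt B in cs sB *.
rewrite -sA -sB.
nra.
Qed.

Lemma enorm_le_box u (h : R) : 0 <= h -> (forall k, `|u ord0 k| <= h) ->
  enorm u <= d%:R * h.
Proof.
move=> h0 hu; rewrite /enorm.
have -> : d%:R * h = Num.sqrt ((d%:R * h) ^+ 2).
  by rewrite sqrtr_sqr ger0_norm // mulr_ge0.
rewrite ler_sqrt ?sqr_ge0 //.
apply: (@le_trans _ _ (\sum_(k < d) h ^+ 2)).
  apply: ler_sum => k _; rewrite -real_normK ?num_real //.
  by rewrite lerXn2r ?nnegrE ?normr_ge0 //.
rewrite sumr_const card_ord exprMn -[h ^+ 2 *+ d]mulr_natl.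
apply: ler_wpM2r; first exact: sqr_ge0.
case: d => [|n]; first by rewrite expr2 mul0r.
rewrite expr2 ler_peMl // ?ler1n //.
Qed.
End Enorm.
Arguments enorm_ge0 {R d}.
Arguments enormN {R d}.
Arguments enorm_sym {R d}.
Arguments enorm_triangle {R d}.
Arguments enorm_le_box {R d}.

Lemma bern_aux (R : realFieldType) (p : R) (n : nat) : 0 <= p <= 1 ->
  (1 + n%:R * p) * (1 - p) ^+ n <= 1.
Proof.
case/andP=> p0 p1; elim: n => [|n IH]; first by rewrite mul0r addr0 expr0 mulr1.
rewrite exprS -natr1.
have q0 : 0 <= (1 - p) ^+ n by rewrite exprn_ge0 // subr_ge0.
have e : (1 + (n%:R + 1) * p) * ((1 - p) * (1 - p) ^+ n) =
   (1 + n%:R * p) * (1 - p) ^+ n - (n%:R + 1) * p ^+ 2 * (1 - p) ^+ n by ring.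
rewrite e; apply: le_trans IH; rewrite lerBlDr lerDl.
by rewrite !mulr_ge0 // ?sqr_ge0 // addr_ge0.
Qed.

Lemma geom_bound (R : realFieldType) (p : R) (n : nat) : 0 <= p <= 1 ->
  p * (1 - p) ^+ n <= n.+1%:R^-1.
Proof.
move=> hp; have /andP[p0 p1] := hp.
rewrite -[n.+1%:R^-1]mul1r ler_pdivlMr ?ltr0n //.
apply: le_trans _ (@bern_aux _ p n hp).
have q0 : 0 <= (1 - p) ^+ n by rewrite exprn_ge0 // subr_ge0.
rewrite -natr1; set q := (1 - p) ^+ n in q0 *.
have : 0 <= q * (1 - p) by rewrite mulr_ge0 // subr_ge0.
nra.
Qed.

Lemma pow_bound (R : realFieldType) (r : R) (d : nat) : 0 <= r <= 1 ->
  1 - r ^+ d <= d%:R * (1 - r).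
Proof.
case/andP=> r0 r1; elim: d => [|d IH]; first by rewrite expr0 subrr mul0r.
rewrite exprS -natr1.
have q1 : r ^+ d <= 1 by rewrite exprn_ile1.
have : 1 - r * r ^+ d = (1 - r ^+ d) + r ^+ d * (1 - r) by ring.
move=> ->; rewrite mulrDl mul1r lerD //.
by rewrite ler_piMl // subr_ge0.
Qed.

Section Indep.
Variables (dT : measure_display) (T : measurableType dT) (R : realType)
  (P : probability T R) (I : eqType) (A : I -> set T).
Hypothesis mA : forall i, measurable (A i).

Definition Ev (s t : seq I) : set T :=
  [set w | (forall i, i \in s -> A i w) /\ (forall i, i \in t -> ~ A i w)].

Lemma Ev_cons_t s j t : Ev s (j :: t) = Ev s t `\` A j.
Proof.
apply/seteqP; split => w /=.
  move=> [hs ht]; split; first split => //.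
    by move=> i it; apply: ht; rewrite in_cons it orbT.
  by apply: ht; rewrite in_cons eqxx.
move=> [[hs ht] nj]; split => // i; rewrite in_cons => /orP[/eqP->//|]; exact: ht.
Qed.

Lemma Ev_I s j t : Ev s t `&` A j = Ev (j :: s) t.
Proof.
apply/seteqP; split => w /=.
  move=> [[hs ht] aj]; split => // i; rewrite in_cons => /orP[/eqP->//|]; exact: hs.
move=> [hs ht]; split; first split => //.
  by move=> i it; apply: hs; rewrite in_cons it orbT.
by apply: hs; rewrite in_cons eqxx.
Qed.

Lemma Ev_measurable s t : measurable (Ev s t).
Proof.
elim: t => [|j t IH]; last by rewrite Ev_cons_t; apply: measurableD.
elim: s => [|i s IH].
  have -> : Ev [::] [::] = setT by apply/seteqP; split => w //= _; split.
  exact: measurableT.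
by rewrite -Ev_I; apply: measurableI.
Qed.

Lemma Ev_prob (q : R) :
  (forall s, uniq s -> P (Ev s [::]) = (q ^+ size s)%:E) ->
  forall t s, uniq (s ++ t) ->
  P (Ev s t) = (q ^+ size s * (1 - q) ^+ size t)%:E.
Proof.
move=> h0; elim=> [|j t IH] s.
  by rewrite cats0 => us; rewrite h0 // expr0 mulr1.
move=> us.
have u1 : uniq (s ++ t).
  by move: us; rewrite -cat1s uniq_catCA cat_uniq => /and3P[].
have u2 : uniq ((j :: s) ++ t) by move: us; rewrite -cat1s uniq_catCA.
have e1 := IH s u1; have e2 := IH (j :: s) u2.
have hD : P (Ev s t `\` A j) = (P (Ev s t) - P (Ev s t `&` A j))%E.
  apply: measureD => //; first exact: Ev_measurable.
  apply: (@le_lt_trans _ _ 1%E); last exact: ltry.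
  exact: (probability_le1 P (Ev_measurable s t)).
rewrite Ev_cons_t hD Ev_I e1 e2 -EFinB; congr (_%:E) => /=.
rewrite exprS.
set a := q ^+ size s; set b := (1 - q) ^+ size t.
by rewrite exprS -/b [q * a]mulrC mulrBl mul1r mulrBr mulrA.
Qed.
End Indep.
Arguments Ev {dT T I} A s t.

Lemma normal_fin {R : realType} {B : set R} : measurable B ->
  (fine (normal_prob 0 1 B))%:E = normal_prob 0 1 B.
Proof.
move=> mB; apply: fineK; rewrite ge0_fin_numE ?measure_ge0 //.
exact: (le_lt_trans (probability_le1 (normal_prob (0:R) 1) mB) (ltry _)).
Qed.

Lemma normal_fine_01 {R : realType} {B : set R} : measurable B ->
  0 <= fine (normal_prob 0 1 B) <= 1.
Proof.
move=> mB; rewrite -!lee_fin normal_fin // measure_ge0 /=.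
exact: (probability_le1 (normal_prob (0:R) 1) mB).
Qed.

Section GaussBox.
Variables (dT : measure_display) (T : measurableType dT) (R : realType)
  (P : probability T R) (J : finType) (d : nat) (W : J -> T -> 'rV[R]_d)
  (Iv : 'I_d -> set R).
Hypothesis hW : iid_std_gaussian_vectors P W.
Hypothesis mIv : forall k, measurable (Iv k).

Definition boxev (j : J) : set T := [set w | forall k, Iv k (W j w ord0 k)].
Definition qbox : R := \prod_k fine (normal_prob 0 1 (Iv k)).

Lemma coord_meas j k B : measurable B -> measurable ((fun w => W j w ord0 k) @^-1` B).
Proof.
move=> mB; have [mX _] := hW.1.
have := mX (j, k) measurableT B mB; by rewrite setTI.
Qed.

Lemma boxev_meas j : measurable (boxev j).
Proof.
have -> : boxev j = \bigcap_(k in [set: 'I_d]) ((fun w => W j w ord0 k) @^-1` Iv k).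
  by apply/seteqP; split => w /=; [move=> h k _; exact: h | move=> h k; exact: h].
apply: fin_bigcap_measurable; first exact: finite_finset.
move=> k _; exact: coord_meas.
Qed.

Lemma boxev_prod s : uniq s -> P (Ev boxev s [::]) = (qbox ^+ size s)%:E.
Proof.
move=> us.
pose B := fun jk : J * 'I_d => if jk.1 \in s then Iv jk.2 else setT.
have mB : forall jk, measurable (B jk).
  by move=> jk; rewrite /B; case: ifP.
have [[_ hprod] hstd] := hW.
have := hprod B mB.
have -> : \bigcap_(i in [set: J * 'I_d])
      ((fun w => W i.1 w ord0 i.2) @^-1` B i) = Ev boxev s [::].
  apply/seteqP; split => w /=.
    move=> h; split => // j js k; have := h (j, k) I; by rewrite /B /= js.
  move=> [h _] [j k] _; rewrite /B /=; case: ifP => // js; exact: h.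
move=> ->.
have -> : (\prod_(i : J * 'I_d) P ((fun w => W i.1 w ord0 i.2) @^-1` B i))%E =
   (\prod_(i : J * 'I_d) (if i.1 \in s then fine (normal_prob 0 1 (Iv i.2)) else 1)%:E)%E.
  apply: eq_bigr => [[j k]] _; rewrite /B /=; case: ifP => _.
    by rewrite normal_fin // (hstd j k).
  by rewrite preimage_setT probability_setT.
rewrite prodEFin; congr (_%:E).
rewrite -(pair_bigA _ (fun j k => if j \in s then fine (normal_prob 0 1 (Iv k)) else 1)) /=.
have -> : \prod_(j : J) \prod_(k < d) (if j \in s then fine (normal_prob 0 1 (Iv k)) else 1)
   = \prod_(j : J) (if j \in s then qbox else 1).
  by apply: eq_bigr => j _; case: ifP => _ //; rewrite big1.
by rewrite -big_mkcond prodr_const (card_uniqP us).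
Qed.

Lemma qbox01 : 0 <= qbox <= 1.
Proof.
rewrite /qbox; elim/big_rec: _ => [|k x _ /andP[x0 x1]]; first by rewrite ler01 lexx.
have /andP[a0 a1] := normal_fine_01 (mIv k).
by rewrite mulr_ge0 //= mulr_ile1.
Qed.

End GaussBox.
Arguments boxev {dT T R J d} W Iv j.
Arguments qbox {R d} Iv.
Arguments boxev_prod {dT T R P J d W Iv} hW mIv s.
Arguments qbox01 {R d Iv} mIv.
Arguments boxev_meas {dT T R P J d W Iv} hW mIv j.
Arguments coord_meas {dT T R P J d W} hW j k {B}.

Lemma sub_bigU (dT : measure_display) (T : measurableType dT) (R : realType)
  (P : probability T R) (I : Type) (s : seq I) (F : I -> set T) :
  (forall i, measurable (F i)) ->
  (P (\big[setU/set0]_(i <- s) F i) <= \sum_(i <- s) P (F i))%E.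
Proof.
move=> mF; elim: s => [|i s IH]; first by rewrite !big_nil measure0.
rewrite !big_cons.
apply: (le_trans (measureU2 P (mF i) (bigsetU_measurable _ _))) => //.
exact: leeD.
Qed.

Lemma prob_fin (dT : measure_display) (T : measurableType dT) (R : realType)
  (P : probability T R) (A : set T) : measurable A -> P A \is a fin_num.
Proof.
move=> mA; rewrite ge0_fin_numE ?measure_ge0 //.
exact: (le_lt_trans (probability_le1 P mA) (ltry _)).
Qed.

Definition Ico {R : realType} (a b : R) : set R := [set x | a <= x < b].
Lemma Ico_meas {R : realType} (a b : R) : measurable (Ico a b).
Proof.
have -> : Ico a b = `[a, b[%classic.
  by apply/seteqP; split => x /=; rewrite in_itv.
exact: measurable_itv.
Qed.

Lemma normal_box_cvg (R : realType) :
  (fun i : nat => fine (normal_prob (0:R) 1 (Ico (- i%:R) i%:R))) @ \oo --> (1:R).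
Proof.
set F := fun i : nat => Ico (- (i%:R : R)) i%:R.
have mF : forall i, measurable (F i) by move=> i; exact: Ico_meas.
have UF : \bigcup_i F i = setT.
  apply/seteqP; split => x // _.
  exists (Num.truncn `|x|).+1 => //; rewrite /F /Ico /=.
  have h := truncnS_gt `|x|.
  move: h; rewrite ltr_norml => /andP[a b]; apply/andP; split => //.
  exact: ltW.
have hom : {homo F : n m / (n <= m)%N >-> (n <= m)%O}.
  move=> a b ab; apply/subsetPset => x; rewrite /F /Ico /= => /andP[x1 x2].
  have : (a%:R : R) <= b%:R by rewrite ler_nat.
  move=> hab; apply/andP; split; lra.
have h := @nondecreasing_cvg_mu _ _ _ (normal_prob (0:R) 1) F mF
  (bigcupT_measurable _ mF) hom.
have e1 : normal_prob (0:R) 1 setT = 1%E := probability_setT _.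
have h' : (fun i => normal_prob (0:R) 1 (F i)) @ \oo --> (1%:E).
  by rewrite -e1 -UF; exact: h.
by have [_ ] := (fine_cvgP _ _).1 h'.
Qed.

Section Main.
Variables (R : realType) (d : nat) (X : normedModType R) (G : 'rV[R]_d -> X)
  (L eps eps' : R) (dT : measure_display) (T : measurableType dT) (P : probability T R)
  (Zs : forall n : nat, 'I_n -> T -> 'rV[R]_d) (Z : nat -> T -> 'rV[R]_d)
  (Inv : forall n : nat, ('I_n -> 'rV[R]_d) -> X -> 'rV[R]_d).
Hypotheses (hd : (0 < d)%N) (hL : 0 <= L) (heps : 0 < eps) (heps' : eps < eps').
Hypothesis hiid : forall n, iid_std_gaussian_vectors P (all_samples (Zs n) (Z n)).
Hypothesis hlip : forall n (w : T) (x y : 'rV[R]_d),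
      enorm (Inv n (fun i => Zs n i w) (G x) - Inv n (fun i => Zs n i w) (G y))
        <= L * enorm (x - y).
Hypothesis htrain : forall n (w : T) (i : 'I_n),
      enorm (Inv n (fun i => Zs n i w) (G (Zs n i w)) - Zs n i w) < eps.
Hypothesis hmeas : forall n, measurable
     [set w | enorm (Inv n (fun i => Zs n i w) (G (Z n w)) - Z n w) < eps'].

Definition good n := [set w | enorm (Inv n (fun i => Zs n i w) (G (Z n w)) - Z n w) < eps'].
Definition delta := (eps' - eps) / (L + 1).

Lemma delta_gt0 : 0 < delta.
Proof. by rewrite /delta divr_gt0 // ?subr_gt0 // ltr_pwDr. Qed.

Lemma det n w i : enorm (Z n w - Zs n i w) < delta -> good n w.
Proof.
move=> hz; rewrite /good /=.
set f := fun x => Inv n (fun i => Zs n i w) (G x).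
set z := Z n w; set y := Zs n i w.
have e : f z - z = (f z - f y) + ((f y - y) + (y - z)).
  by rewrite -!addrA !addKr.
rewrite e.
apply: le_lt_trans (enorm_triangle _ _) _.
apply: le_lt_trans (lerD (lexx _) (enorm_triangle _ _)) _.
have h1 : enorm (f z - f y) <= L * enorm (z - y) := hlip n w z y.
have h2 : enorm (f y - y) < eps := htrain n w i.
rewrite (enorm_sym y z).
have hde : delta * (L + 1) = eps' - eps.
  by rewrite /delta divfK // gt_eqF // ltr_pwDr.
have hz0 := enorm_ge0 (z - y).
have : L * enorm (z - y) <= L * delta by rewrite ler_wpM2l // ltW.
nra.
Qed.


Definition Wn n := all_samples (Zs n) (Z n).
Definition IvB (M : R) : 'I_d -> set R := fun _ => Ico (-M) M.
Definition hw (M : R) (m : nat) : R := 2 * M / m%:R.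
Definition Ivc (M : R) (m : nat) (c : {ffun 'I_d -> 'I_m}) : 'I_d -> set R :=
  fun k => Ico (-M + (c k)%:R * hw M m) (-M + (c k).+1%:R * hw M m).
Definition Out n M := ~` Ev (boxev (Wn n) (IvB M)) [:: None] [::].
Definition Cb n M m (c : {ffun 'I_d -> 'I_m}) :=
  Ev (boxev (Wn n) (Ivc M m c)) [:: None] (map Some (enum 'I_n)).

Lemma hw_gt0 M m' : 0 < M -> 0 < hw M m'.+1.
Proof. by move=> M0; rewrite /hw divr_gt0 // mulr_gt0. Qed.

Lemma cell_exists M m' (x : R) : 0 < M -> -M <= x < M ->
  exists i : 'I_m'.+1, -M + i%:R * hw M m'.+1 <= x < -M + i.+1%:R * hw M m'.+1.
Proof.
move=> M0 /andP[x1 x2].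
have h0 := hw_gt0 M m' M0; set h := hw M m'.+1 in h0 *.
set y := (x + M) / h.
have xM : 0 <= x + M by lra.
have y0 : 0 <= y by rewrite /y divr_ge0 // ltW.
have [t1 t2] := andP (truncn_itv y0).
have ylt : y < m'.+1%:R.
  rewrite /y ltr_pdivrMr // /h /hw mulrCA divff ?mulr1 ?pnatr_eq0 //.
  by rewrite mulr2n mulrDl mul1r ltrD2r.
have ht : (Num.truncn y < m'.+1)%N by rewrite truncn_lt_nat.
exists (Ordinal ht) => /=.
have yh : y * h = x + M by rewrite /y divfK // gt_eqF.
move: t1 t2 yh; set t := (Num.truncn y)%:R; set t' := (Num.truncn y).+1%:R.
move=> t1 t2 yh; apply/andP; split; nra.
Qed.

Lemma in_bigU (I : finType) (F : I -> set T) (c : I) w :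
  F c w -> (\big[setU/set0]_(i : I) F i) w.
Proof.
have : c \in index_enum I by rewrite mem_index_enum.
rewrite unlock /=; elim: (index_enum I) => [//|i s IH].
rewrite in_cons => /orP[/eqP <- Fc|cs Fc] /=; first by left.
by right; apply: IH.
Qed.

Lemma cover n M m' : 0 < M -> d%:R * hw M m'.+1 < delta ->
  ~` good n `<=` Out n M `|`
     \big[setU/set0]_(c : {ffun 'I_d -> 'I_m'.+1}) Cb n M m'.+1 c.
Proof.
move=> M0 hsmall w /= ngood.
case: (pselect (Ev (boxev (Wn n) (IvB M)) [:: None] [::] w)) => hin; last by left.
right.
have hz : forall k, -M <= Z n w ord0 k < M.
  move=> k; have := hin.1 None (mem_head _ _) k; by [].
have : forall k, exists i : 'I_m'.+1,
    -M + i%:R * hw M m'.+1 <= Z n w ord0 k < -M + i.+1%:R * hw M m'.+1.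
  by move=> k; apply: cell_exists.
move=> /choice [c hc].
apply: (@in_bigU _ _ [ffun k => c k]).
split.
  move=> j; rewrite mem_seq1 => /eqP -> k /=; rewrite /Ivc ffunE /=; exact: hc.
move=> j /mapP [i _ ->] hcell; apply: ngood; apply: (@det n w i).
apply: le_lt_trans hsmall.
have h0 := hw_gt0 M m' M0.
apply: enorm_le_box; first exact: ltW.
move=> k; rewrite !mxE.
have := hc k; have := hcell k; rewrite /Ivc ffunE /=.
set a := -M + _ * _; set b := -M + _ * _.
have -> : b = a + hw M m'.+1 by rewrite /a /b -natr1 mulrDl mul1r addrA.
move=> /andP[y1 y2] /andP[x1 x2].
rewrite ler_norml; apply/andP; split; lra.
Qed.

Lemma bound n M m' : 0 < M -> d%:R * hw M m'.+1 < delta ->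
  1 - fine (P (good n)) <=
  (1 - (fine (normal_prob 0 1 (Ico (-M) M))) ^+ d)
    + #|{ffun 'I_d -> 'I_m'.+1}|%:R / n.+1%:R.
Proof.
move=> M0 hsmall.
set r := fine (normal_prob 0 1 (Ico (-M) M)).
have hW : iid_std_gaussian_vectors P (Wn n) := hiid n.
have mB : forall k, measurable (IvB M k) by move=> k; exact: Ico_meas.
have mC : forall (c : {ffun 'I_d -> 'I_m'.+1}) k, measurable (Ivc M m'.+1 c k).
  by move=> c k; exact: Ico_meas.
have qB : qbox (IvB M) = r ^+ d by rewrite /qbox /IvB prodr_const card_ord.
have hbox : P (Ev (boxev (Wn n) (IvB M)) [:: None] [::]) = (r ^+ d)%:E.
  rewrite (@Ev_prob _ _ _ P _ _ (boxev_meas hW mB) _ (boxev_prod hW mB) [::] [:: None]) //.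
  by rewrite /= expr1 expr0 mulr1 qB.
have mbox : measurable (Ev (boxev (Wn n) (IvB M)) [:: None] [::]).
  exact: Ev_measurable (boxev_meas hW mB) _ _.
have hOut : P (Out n M) = (1 - r ^+ d)%:E.
  by rewrite /Out probability_setC // hbox EFinB.
have us : uniq ([:: None] ++ map Some (enum 'I_n)).
  rewrite /= map_inj_uniq ?enum_uniq ?andbT; last by move=> x y [].
  by apply/negP => /mapP [].
have hCb : forall c, (P (Cb n M m'.+1 c) <= (n.+1%:R^-1)%:E)%E.
  move=> c.
  rewrite /Cb (@Ev_prob _ _ _ P _ _ (boxev_meas hW (mC c)) _ (boxev_prod hW (mC c)) _ [:: None] us).
  rewrite lee_fin /= expr1 size_map size_enum_ord.
  exact: geom_bound (qbox01 (mC c)).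
have mCb : forall c, measurable (Cb n M m'.+1 c).
  by move=> c; exact: Ev_measurable (boxev_meas hW (mC c)) _ _.
have mOut : measurable (Out n M) by exact: measurableC.
have mU : measurable (\big[setU/set0]_(c : {ffun 'I_d -> 'I_m'.+1}) Cb n M m'.+1 c).
  by apply: bigsetU_measurable => c _; exact: mCb.
have hle : (P (~` good n) <= (1 - r ^+ d)%:E
     + (#|{ffun 'I_d -> 'I_m'.+1}|%:R / n.+1%:R)%:E)%E.
  have mG : (~` good n) \in measurable by rewrite inE; apply: measurableC; exact: hmeas.
  have mOU : (Out n M `|` \big[setU/set0]_(c : {ffun 'I_d -> 'I_m'.+1}) Cb n M m'.+1 c)
     \in measurable by rewrite inE; apply: measurableU.
  set U := \big[setU/set0]_(c : {ffun 'I_d -> 'I_m'.+1}) Cb n M m'.+1 c.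
  have h1 : (P (~` good n) <= P (Out n M `|` U))%E :=
    @le_measure _ _ _ P _ _ mG mOU (@cover n M m' M0 hsmall).
  have h2 : (P (Out n M `|` U) <= P (Out n M) + P U)%E := measureU2 P mOut mU.
  have h3 : (P U <= \sum_(c : {ffun 'I_d -> 'I_m'.+1}) P (Cb n M m'.+1 c))%E :=
    @sub_bigU _ _ _ P _ _ _ mCb.
  apply: (le_trans h1); apply: (le_trans h2).
  rewrite hOut; apply: leeD => //.
  apply: (le_trans h3).
  have h4 : (\sum_(c : {ffun 'I_d -> 'I_m'.+1}) P (Cb n M m'.+1 c) <=
     \sum_(c : {ffun 'I_d -> 'I_m'.+1}) (n.+1%:R^-1)%:E)%E.
    by apply: lee_sum => c _; exact: hCb c.
  apply: (le_trans h4).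
  by rewrite sumEFin sumr_const lee_fin mulr_natl.
have fg := fineK (@prob_fin _ _ _ P _ (hmeas n)).
move: hle; rewrite probability_setC //; last exact: hmeas.
move=> h; rewrite -lee_fin EFinB fg EFinD; exact: h.
Qed.

Lemma main_cvg : (fun n => P (good n)) @ \oo --> 1%E.
Proof.
apply: cvg_EFin; first by apply: nearW => n; exact: (@prob_fin _ _ _ P _ (hmeas n)).
apply/cvgrPdist_le => e e0.
have dpos : 0 < d%:R :> R by rewrite ltr0n.
set e2 := e / 2 / d%:R.
have e2pos : 0 < e2 by rewrite /e2 !divr_gt0.
have hr := normal_box_cvg R.
move/cvgrPdist_le: hr => /(_ e2 e2pos) [N _ HN].
have hi := HN N.+1 (leqnSn N); move: hi => /=.
set M : R := N.+1%:R.
set r := fine (normal_prob 0 1 (Ico (- M) M)) => hr.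
have M0 : 0 < M by rewrite ltr0n.
have hdelta := delta_gt0.
set m' := Num.truncn (d%:R * (2 * M) / delta).
have hsmall : d%:R * hw M m'.+1 < delta.
  have t := truncnS_gt (d%:R * (2 * M) / delta).
  rewrite -/m' ltr_pdivrMr // in t.
  rewrite /hw mulrA ltr_pdivrMr ?ltr0n //; lra.
set K := #|{ffun 'I_d -> 'I_m'.+1}|%:R : R.
have K0 : 0 <= K by rewrite ler0n.
near=> n.
have hb := @bound n M m' M0 hsmall; rewrite -/r -/K in hb.
have g1 : fine (P (good n)) <= 1.
  rewrite -lee_fin (fineK (@prob_fin _ _ _ P _ (hmeas n))).
  exact: probability_le1.
have r01 : 0 <= r <= 1 by apply: normal_fine_01; exact: Ico_meas.
have hpow := @pow_bound _ r d r01.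
have hr' : 1 - r <= e2 by move: hr; rewrite ler_norml => /andP[].
have hde : d%:R * e2 = e / 2 by rewrite /e2 mulrC divfK // gt_eqF.
have hpow' : 1 - r ^+ d <= e / 2.
  by apply: le_trans hpow _; rewrite -hde ler_wpM2l // ltW.
have hn : 2 * K / e <= n%:R by near: n; exact: nbhs_infty_ger.
have hN : K / n.+1%:R <= e / 2.
  rewrite ler_pdivrMr ?ltr0n //.
  rewrite ler_pdivrMr // in hn.
  have -> : n.+1%:R = n%:R + 1 :> R by rewrite natr1.
  have h2 : K <= n%:R * e / 2 by rewrite ler_pdivlMr // mulrC.
  have id : e / 2 * (n%:R + 1) = n%:R * e / 2 + e / 2.
    by rewrite mulrDr mulr1 mulrC mulrA.
  rewrite id; apply: le_trans h2 _; rewrite lerDl.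
  by rewrite divr_ge0 // ltW.
rewrite ger0_norm; last by rewrite subr_ge0.
have he := splitr e.
set a := e / 2 in hpow' hN he; set b := K / n.+1%:R in hb hN.
set u := fine (P (good n)) in hb g1 *; set c := r ^+ d in hb hpow'.
lra.
Unshelve. all: by end_near.
Qed.

End Main.

Theorem theorem1
  (R : realType) (d : nat) (X : normedModType R)
  (G : 'rV[R]_d -> X)
  (L eps eps' : R)
  (dT : measure_display) (T : measurableType dT) (P : probability T R)
  (Zs : forall n : nat, 'I_n -> T -> 'rV[R]_d)
  (Z : nat -> T -> 'rV[R]_d)
  (Inv : forall n : nat, ('I_n -> 'rV[R]_d) -> X -> 'rV[R]_d) :
  (0 < d)%N ->
  0 <= L -> 0 < eps -> eps < eps' ->
  (* z^(1), ..., z^(n), z are i.i.d. N(0, I_d) *)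
  (forall n, iid_std_gaussian_vectors P (all_samples (Zs n) (Z n))) ->
  (* I_n o G is L-Lipschitz (I_n depends only on the training samples) *)
  (forall n (w : T) (x y : 'rV[R]_d),
      enorm (Inv n (fun i => Zs n i w) (G x) - Inv n (fun i => Zs n i w) (G y))
        <= L * enorm (x - y)) ->
  (* training error below eps on every training sample *)
  (forall n (w : T) (i : 'I_n),
      enorm (Inv n (fun i => Zs n i w) (G (Zs n i w)) - Zs n i w) < eps) ->
  (* the event in question is an event (so that its probability is defined) *)
  (forall n, measurable
     [set w | enorm (Inv n (fun i => Zs n i w) (G (Z n w)) - Z n w) < eps']) ->
  (fun n => P [set w | enorm (Inv n (fun i => Zs n i w) (G (Z n w)) - Z n w) < eps'])
    @ \oo --> 1%E.
Proof.
move=> hd hL he he' hi hl ht hm.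
exact: (@main_cvg R d X G L eps eps' dT T P Zs Z Inv hd hL he' hi hl ht hm).
Qed.
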